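(* Let $t\ge 2$ be an integer. For every integer $n\ge 1$, $$ex(n,n,n,K_{2,t}) \le \frac{3}{2}\, n\Big(1+\sqrt{2(t-1)(n-1)+1}\Big).$$
   Context: $K_{2,t}$ denotes the complete bipartite graph with parts of sizes $2$ and $t$. For an integer $n\ge1$, $ex(n,n,n,K_{2,t})$ is the maximum number of edges in a tripartite graph with three vertex classes each of size $n$ (edges only between different classes) that contains no subgraph isomorphic to $K_{2,t}$. *)

(* Defs.v *)
From mathcomp Require Import all_boot.
From Stdlib Require Import Reals.

Set Implicit Arguments.
Unset Strict Implicit.
Unset Printing Implicit Defensive.

(* Vertices of the tripartite host: class index in 'I_3, position in 'I_n. *)
Definition tvert (n : nat) : finType := ('I_3 * 'I_n)%type.

Definition simple_graph (V : finType) (e : rel V) : Prop :=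
  (forall x y, e x y = e y x) /\ (forall x, e x x = false).

Definition tripartite (n : nat) (e : rel (tvert n)) : Prop :=
  simple_graph e /\ (forall x y : tvert n, e x y -> x.1 != y.1).

Definition num_edges (V : finType) (e : rel V) : nat :=
  #|[set s : {set V} | [exists x, exists y, (x != y) && (s == [set x; y]) && e x y]]|.

(* e contains a (not necessarily induced) copy of K_{2,t}: two distinct
   vertices a, b and a set S of t vertices, each adjacent to both a and b. *)
Definition contains_K2t (V : finType) (t : nat) (e : rel V) : Prop :=
  exists a b : V, exists S : {set V},
    [/\ a != b, a \notin S, b \notin S, #|S| = t &
        forall z, z \in S -> e a z && e b z].

(* Main.v *)
Require Import Defs.
From mathcomp Require Import all_boot zify.
Set Implicit Arguments. Unset Strict Implicit.

Lemma sumb_card (T : finType) (P : pred T) : \sum_(x : T) (P x : nat) = #|[set x | P x]|.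
Proof. rewrite -sum1dep_card [RHS]big_mkcond /=. apply: eq_bigr => x _. by case: (P x). Qed.

Lemma sum_minus1 (T : finType) (P : pred T) y : P y ->
  \sum_z (P z && (y != z) : nat) = \sum_z (P z : nat) - 1.
Proof.
move=> Py; rewrite [X in _ = X - 1](bigD1 y) //= Py add1n subSS subn0.
rewrite [RHS]big_mkcond /=; apply: eq_bigr => z _.
by rewrite eq_sym; case: (z != y); rewrite ?andbT ?andbF.
Qed.

Lemma sum_pairs (T : finType) (P : pred T) :
  (\sum_y (P y : nat)) * (\sum_y (P y : nat) - 1) =
  \sum_y \sum_z ([&& P y, P z & y != z] : nat).
Proof.
rewrite big_distrl /=; apply: eq_bigr => y _.
case Py: (P y); last by rewrite mul0n big1.
by rewrite mul1n /= sum_minus1.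
Qed.
Lemma codeg t n (e : rel (tvert n)) : tripartite e -> ~ contains_K2t t e ->
  forall y z, y != z -> \sum_v ((e v y && e v z) : nat) <= t - 1.
Proof.
move=> [[esym eirr] _] noK y z yz.
rewrite sumb_card leqNgt; apply/negP => H.
have : t <= #|[set v | e v y && e v z]| by lia.
move/card_geqP => [s [us ss sub]].
apply: noK; exists y, z, [set x in s]; split => //.
- rewrite inE; apply/negP => /sub; by rewrite inE eirr.
- rewrite inE; apply/negP => /sub; by rewrite inE eirr andbF.
- by rewrite cardsE -ss; apply/card_uniqP.
move=> x; rewrite inE => /sub; by rewrite inE (esym y) (esym z).
Qed.

Lemma count_same n (y : tvert n) :
  \sum_z (((y.1 == z.1) && (y != z)) : nat) = n - 1.
Proof.
have := @sum_minus1 _ (fun z : tvert n => y.1 == z.1) y (eqxx _).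
move=> /= ->; congr (_ - 1).
rewrite -(pair_bigA _ (fun a (b : 'I_n) => (y.1 == a) : nat)) /=.
rewrite (eq_bigr (fun a => (y.1 == a) * n)); last by move=> a _; rewrite sum_nat_const card_ord mulnC.
rewrite -big_distrl /= sumb_card.
have -> : [set a | y.1 == a] = [set y.1] by apply/setP => a; rewrite !inE eq_sym.
by rewrite cards1 mul1n.
Qed.
Definition deg n (e : rel (tvert n)) (v : tvert n) (j : 'I_2) : nat :=
  \sum_(y : tvert n) ((y.1 == lift v.1 j) && e v y).

Lemma handshake n (e : rel (tvert n)) : tripartite e ->
  2 * num_edges e <= \sum_(p : tvert n * 'I_2) deg e p.1 p.2.
Proof.
move=> [[esym eirr] etri].
rewrite -(pair_bigA _ (fun v j => deg e v j)) /=.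
apply: (@leq_trans (\sum_v #|[set y | e v y]|)); last first.
  apply: leq_sum => v _.
  rewrite -sumb_card /deg exchange_big /=.
  apply: leq_sum => y _.
  case Evy: (e v y) => //.
  have := etri _ _ Evy.
  case: (unliftP v.1 y.1) => [j ->|->]; last by rewrite eqxx.
  move=> _; rewrite (bigD1 j) //= eqxx /=; exact: leq_addr.
rewrite /num_edges; set E := [set s : {set tvert n} | _].
apply: (@leq_trans (\sum_v #|[set s in E | v \in s]|)).
  have -> : \sum_v #|[set s in E | v \in s]| = \sum_s \sum_v ((s \in E) && (v \in s)).
    rewrite exchange_big /=; apply: eq_bigr => v _; rewrite sumb_card.
    apply: eq_card => s; by rewrite !inE.
  rewrite (eq_bigr (fun s => (s \in E) * 2)).
    rewrite -big_distrl /= sumb_card mulnC; apply: leq_mul => //; apply: subset_leq_card; apply/subsetP => s0; rewrite !inE; exact: id.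
  move=> s _; case sE: (s \in E); last by rewrite big1.
  rewrite /= sumb_card cardsE.
  move: sE; rewrite inE => /existsP [x /existsP [y /andP [/andP [xy /eqP ->] _]]].
  by rewrite cards2 xy.
apply: leq_sum => v _.
apply: (@leq_trans #|(fun y => [set v; y]) @: [set y | e v y]|); last exact: leq_imset_card.
apply: subset_leq_card; apply/subsetP => s; rewrite !inE => /andP [].
move=> /existsP [x /existsP [y /andP [/andP [xy /eqP ->] exy]]].
rewrite !inE => /orP [] /eqP ->.
  by apply/imsetP; exists y; rewrite ?inE.
by apply/imsetP; exists x; [rewrite inE esym | rewrite setUC].
Qed.

Lemma codeg_sum t n (e : rel (tvert n)) : tripartite e -> ~ contains_K2t t e ->
  \sum_(p : tvert n * 'I_2) deg e p.1 p.2 * (deg e p.1 p.2 - 1)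
    <= (t - 1) * (3 * n * (n - 1)).
Proof.
move=> etri noK.
have cd := codeg etri noK.
rewrite -(pair_bigA _ (fun v j => deg e v j * (deg e v j - 1))) /=.
apply: (@leq_trans (\sum_v \sum_y \sum_z
   ([&& y.1 == z.1, e v y, e v z & y != z] : nat))).
  apply: leq_sum => v _.
  under eq_bigr do rewrite /deg sum_pairs.
  rewrite exchange_big; apply: leq_sum => y _ /=.
  rewrite exchange_big; apply: leq_sum => z _ /=.
  case: (pickP (fun j : 'I_2 => [&& (y.1 == lift v.1 j) && e v y,
                  (z.1 == lift v.1 j) && e v z & y != z])) => [j0 Hj0|H0]; last first.
    by rewrite big1 // => j _; rewrite H0.
  move: (Hj0) => /and3P [/andP [/eqP y1 evy] /andP [/eqP z1 evz] yz].
  rewrite y1 z1 eqxx evy evz yz /= sumb_card.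
  apply: (leq_trans (subset_leq_card (_ : _ \subset [set j0]))); last by rewrite cards1.
  apply/subsetP => j; rewrite !inE !andbT => /andP [/eqP h _]; apply/eqP; symmetry; exact: lift_inj h.
rewrite exchange_big /=.
apply: (@leq_trans (\sum_y \sum_z (((y.1 == z.1) && (y != z)) : nat) * (t - 1))).
  apply: leq_sum => y _; rewrite exchange_big /=; apply: leq_sum => z _.
  case yz: (y != z); last first.
    by rewrite big1 // => v _; rewrite !andbF.
  case y1: (y.1 == z.1); last by rewrite big1.
  rewrite mul1n; apply: leq_trans (cd y z yz).
  apply: leq_sum => v _; by rewrite andbT.
rewrite (eq_bigr (fun y => (n - 1) * (t - 1))); last first.
  by move=> y _; rewrite -big_distrl /= count_same.
rewrite sum_nat_const; set c := #|_|.
have -> : c = 3 * n by rewrite /c; have := card_prod 'I_3 'I_n; rewrite !card_ord => <-; apply: eq_card.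
lia.
Qed.
Lemma amgm a b : 2 * (a * b) <= a ^ 2 + b ^ 2.
Proof. have [h|h] := leqP a b.
- have := sqrnB h. have : 0 <= (b - a)^2 by []. nia.
- have h' := ltnW h. have := sqrnB h'. nia. Qed.
Lemma cs_nat (I : finType) (x : I -> nat) :
  (\sum_i x i) ^ 2 <= #|I| * \sum_i (x i) ^ 2.
Proof.
have E : (\sum_i x i) ^ 2 = \sum_i \sum_j x i * x j.
  rewrite expnS expn1 big_distrl /=; apply: eq_bigr => i _; by rewrite big_distrr.
rewrite -(leq_pmul2l (isT : 0 < 2)) E big_distrr /=.
have -> : 2 * (#|I| * \sum_i x i ^ 2) = \sum_i \sum_j (x i ^ 2 + x j ^ 2).
  rewrite [RHS](eq_bigr (fun i => #|I| * x i ^ 2 + \sum_j x j ^ 2)); last first.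
    by move=> i _; rewrite big_split /= sum_nat_const.
  rewrite big_split /= sum_nat_const -big_distrr /= mul2n -addnn.
  by congr (_ + _); congr (_ * _); apply: eq_card.
apply: leq_sum => i _. rewrite big_distrr /=. apply: leq_sum => j _. exact: amgm.
Qed.
Lemma key_nat t n (e : rel (tvert n)) : tripartite e -> ~ contains_K2t t e ->
  exists s, 2 * num_edges e <= s /\
    s * s <= 6 * n * s + 18 * (t - 1) * (n * n * (n - 1)).
Proof.
move=> etri noK.
exists (\sum_(p : tvert n * 'I_2) deg e p.1 p.2); split; first exact: handshake.
have cs := cs_nat (fun p : tvert n * 'I_2 => deg e p.1 p.2).
have cb := codeg_sum etri noK.
have C : #|{: tvert n * 'I_2}| = 3 * n * 2.
  rewrite card_prod card_ord; congr (_ * _).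
  by have := card_prod 'I_3 'I_n; rewrite !card_ord => <-; apply: eq_card.
rewrite C in cs.
have E2 : \sum_(p : tvert n * 'I_2) deg e p.1 p.2 ^ 2 =
  \sum_(p : tvert n * 'I_2) deg e p.1 p.2 * (deg e p.1 p.2 - 1) +
  \sum_(p : tvert n * 'I_2) deg e p.1 p.2.
  rewrite -big_split /=; apply: eq_bigr => p _.
  case: (deg e p.1 p.2) => [|k] //=. rewrite subSS subn0. lia.
rewrite E2 in cs.
move: cs cb.
set s := \sum_(p : tvert n * 'I_2) deg e p.1 p.2.
set D := \sum_(p : tvert n * 'I_2) _.
rewrite -[s * s]/(s ^ 2).
move=> cs cb.
apply: (leq_trans cs). nia.
Qed.
From Stdlib Require Import Reals Lra Psatz.
Unset Implicit Arguments.
Open Scope R_scope.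

Theorem theorem1 (t n : nat) (Ht : leq 2 t) (Hn : leq 1 n)
  (e : rel (tvert n)) :
  tripartite e -> ~ contains_K2t t e ->
  INR (num_edges e) <=
    3 / 2 * INR n * (1 + sqrt (2 * (INR t - 1) * (INR n - 1) + 1)).
Proof.
move=> etri noK.
have [s [H1 H2]] := key_nat etri noK.
move: H1 H2; set m := num_edges e.
case: t Ht noK => [|t1] // Ht _; case: n Hn e etri m s => [|n1] // Hn e etri m s.
rewrite !subSS !subn0 => H1 H2.
have e2 : INR 2 = 2 by rewrite INR_IZR_INZ.
have e6 : INR 6 = 6 by rewrite INR_IZR_INZ.
have e18 : INR 18 = 18 by rewrite INR_IZR_INZ.
have R1 : 2 * INR m <= INR s.
  by have := le_INR _ _ (elimT leP H1); rewrite mult_INR e2.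
have R2 : INR s * INR s <= 6 * INR n1.+1 * INR s + 18 * INR t1 * (INR n1.+1 * INR n1.+1 * INR n1).
  have := le_INR _ _ (elimT leP H2).
  rewrite (mult_INR s s) (plus_INR (6 * n1.+1 * s)) (mult_INR (6 * n1.+1) s) (mult_INR 6 n1.+1) (mult_INR (18 * t1)) (mult_INR 18 t1) (mult_INR (n1.+1 * n1.+1)) (mult_INR n1.+1 n1.+1) e6 e18. lra.
rewrite !S_INR in R2 *.
have T0 : 0 <= INR t1 by apply: pos_INR.
have N0 : 0 <= INR n1 by apply: pos_INR.
have -> : INR t1 + 1 - 1 = INR t1 by ring.
have -> : INR n1 + 1 - 1 = INR n1 by ring.
set K := 2 * INR t1 * INR n1 + 1.
have K0 : 0 <= K by rewrite /K; nra.
have rK := sqrt_sqrt K K0.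
have r0 := sqrt_pos K.
set r := sqrt K in rK r0 *.
set N := INR n1 + 1 in R2 *.
set S := INR s in R1 R2.
have N1 : 1 <= N by rewrite /N; lra.
suff : S <= 3 * N * (1 + r) by lra.
apply: Rnot_lt_le => HS.
have A : 0 < S - 3 * N - 3 * N * r by lra.
have B : 0 < S - 3 * N + 3 * N * r by nra.
have := Rmult_lt_0_compat _ _ A B.
rewrite /K in rK. nra.
Qed.
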